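(* Let $F\subset A^*$ be a recurrent set and let $X\subset F$ be an $F$-thin set. The following conditions are equivalent: (i) $X$ is an $F$-maximal bifix code; (ii) $X$ is a prefix code which is left $F$-complete; (ii') $X$ is a suffix code which is right $F$-complete; (iii) $X$ is both an $F$-maximal prefix code and an $F$-maximal suffix code.
   Context: $A$ is a finite alphabet, $A^*$ the free monoid, $1$ the empty word, $A^+=A^*\setminus\{1\}$. A set $F\subset A^*$ is factorial if it is nonempty and contains all factors of its elements; it is recurrent if it is factorial and for all $u,w\in F$ there is $v\in F$ with $uvw\in F$. A prefix code is a set $X\subset A^+$ in which no element is a proper prefix of another; a suffix code is defined symmetrically; a bifix code is both. For $X\subset F$: $X$ is an $F$-maximal prefix (resp. suffix, bifix) code if it is a prefix (resp. suffix, bifix) code not properly contained in any prefix (resp. suffix, bifix) code $Y\subset F$. $X$ is $F$-thin if some word of $F$ is not a factor of any word of $X$. $X$ is right $F$-complete if every word of $F$ is a prefix of a word of $X^*$, and left $F$-complete if every word of $F$ is a suffix of a word of $X^*$. *)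

(* Defs.v *)
From mathcomp Require Import all_boot.
Set Implicit Arguments. Unset Strict Implicit. Unset Printing Implicit Defensive.

Section Words.
Variable A : finType.
Definition lang := seq A -> Prop.

Definition subset_lang (X Y : lang) : Prop := forall w, X w -> Y w.

Definition factor (u w : seq A) : Prop := exists p s, w = p ++ u ++ s.
Definition is_prefix (u w : seq A) : Prop := exists s, w = u ++ s.
Definition is_suffix (u w : seq A) : Prop := exists p, w = p ++ u.

Definition factorial (F : lang) : Prop :=
  (exists w, F w) /\ forall w u, F w -> factor u w -> F u.

Definition recurrent (F : lang) : Prop :=
  factorial F /\ forall u w, F u -> F w -> exists v, F v /\ F (u ++ v ++ w).

Definition prefix_code (X : lang) : Prop :=
  (forall x, X x -> x <> [::]) /\
  (forall x y, X x -> X y -> is_prefix x y -> x = y).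
Definition suffix_code (X : lang) : Prop :=
  (forall x, X x -> x <> [::]) /\
  (forall x y, X x -> X y -> is_suffix x y -> x = y).
Definition bifix_code (X : lang) : Prop := prefix_code X /\ suffix_code X.

Definition F_maximal (code : lang -> Prop) (F X : lang) : Prop :=
  code X /\ subset_lang X F /\
  forall Y, code Y -> subset_lang Y F -> subset_lang X Y -> subset_lang Y X.

Definition F_maximal_prefix (F X : lang) := F_maximal prefix_code F X.
Definition F_maximal_suffix (F X : lang) := F_maximal suffix_code F X.
Definition F_maximal_bifix (F X : lang) := F_maximal bifix_code F X.

Definition F_thin (F X : lang) : Prop :=
  exists w, F w /\ forall x, X x -> ~ factor w x.

Definition star (X : lang) (w : seq A) : Prop :=
  exists l : seq (seq A), (forall x, x \in l -> X x) /\ w = flatten l.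

Definition right_F_complete (F X : lang) : Prop :=
  forall w, F w -> exists u, star X u /\ is_prefix w u.
Definition left_F_complete (F X : lang) : Prop :=
  forall w, F w -> exists u, star X u /\ is_suffix w u.
End Words.

(* Main.v *)
Require Import Defs.
From mathcomp Require Import all_boot.
From Stdlib Require Import Classical ClassicalEpsilon.
Set Implicit Arguments. Unset Strict Implicit. Unset Printing Implicit Defensive.

Section Gen.
Variable A : finType.
Implicit Types (F X Y : lang A) (u v w x y z : seq A).

Lemma cat_cmp (a b c d : seq A) : a ++ b = c ++ d ->
  (exists k, c = a ++ k) \/ (exists k, a = c ++ k).
Proof.
elim: a c => [|x a IH] [|y c] /=.
- by move=> _; left; exists [::].
- by move=> _; left; exists (y :: c).
- by move=> _; right; exists (x :: a).
- case=> -> /IH [[k ->]|[k ->]]; [left|right]; by exists k.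
Qed.

Lemma uniq_map_inj (T1 T2 : eqType) (f : T1 -> T2) (s : seq T1) a b :
  uniq (map f s) -> a \in s -> b \in s -> f a = f b -> a = b.
Proof.
elim: s => //= c s IH /andP [Hn Hu].
rewrite !in_cons => /orP [/eqP ->|Ha] /orP [/eqP ->|Hb] //.
- move=> E; case/negP: Hn; rewrite E; exact: map_f.
- move=> E; case/negP: Hn; rewrite -E; exact: map_f.
- exact: IH.
Qed.

Lemma factor_trans u v w : factor u v -> factor v w -> factor u w.
Proof.
move=> [p [s ->]] [p' [s' ->]]; exists (p' ++ p), (s ++ s').
by rewrite !catA.
Qed.

Lemma star_flatten X l : (forall x, x \in l -> X x) -> star X (flatten l).
Proof. by move=> H; exists l. Qed.

Lemma prefix_cmp x y s t : x ++ s = y ++ t -> is_prefix x y \/ is_prefix y x.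
Proof.
move/cat_cmp=> [[k ->]|[k ->]]; [left|right]; by exists k.
Qed.

Lemma suffix_cmp x y s t : s ++ x = t ++ y -> is_suffix x y \/ is_suffix y x.
Proof.
move=> E.
have: rev x ++ rev s = rev y ++ rev t by rewrite -!rev_cat E.
move/cat_cmp=> [[k Hk]|[k Hk]]; [left|right]; exists (rev k).
- by rewrite -(revK y) Hk rev_cat revK.
- by rewrite -(revK x) Hk rev_cat revK.
Qed.

Definition revL X : lang A := fun w => X (rev w).

Lemma pre_rev u w : is_prefix u w <-> is_suffix (rev u) (rev w).
Proof.
split=> [[s ->]|[p E]]; first by exists (rev s); rewrite rev_cat.
by exists (rev p); rewrite -(revK w) E rev_cat revK.
Qed.

Lemma suf_rev u w : is_suffix u w <-> is_prefix (rev u) (rev w).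
Proof.
split=> [[s ->]|[p E]]; first by exists (rev s); rewrite rev_cat.
by exists (rev p); rewrite -(revK w) E rev_cat revK.
Qed.

Lemma factor_rev u w : factor u w -> factor (rev u) (rev w).
Proof. by move=> [p [s ->]]; exists (rev s), (rev p); rewrite !rev_cat catA. Qed.

Lemma star_rev X w : star X w -> star (revL X) (rev w).
Proof.
move=> [l [Hl ->]]; exists (rev (map rev l)); split; last by rewrite rev_flatten.
move=> x; rewrite mem_rev => /mapP [y Hy ->]; rewrite /revL revK; exact: Hl.
Qed.

Lemma star_rev' X w : star (revL X) w -> star X (rev w).
Proof.
move=> [l [Hl ->]]; exists (rev (map rev l)); split; last by rewrite rev_flatten.
move=> x; rewrite mem_rev => /mapP [y Hy ->]; exact: Hl.
Qed.

Lemma PC_rev X : suffix_code X -> prefix_code (revL X).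
Proof.
move=> [H1 H2]; split=> [x Hx|x y Hx Hy Hp].
  by move=> E; apply: (H1 _ Hx); rewrite E.
have E := H2 _ _ Hx Hy (proj1 (pre_rev _ _) Hp).
by rewrite -(revK x) E revK.
Qed.

Lemma SC_rev X : prefix_code X -> suffix_code (revL X).
Proof.
move=> [H1 H2]; split=> [x Hx|x y Hx Hy Hp].
  by move=> E; apply: (H1 _ Hx); rewrite E.
have E := H2 _ _ Hx Hy (proj1 (suf_rev _ _) Hp).
by rewrite -(revK x) E revK.
Qed.

Lemma PC_rev' X : prefix_code (revL X) -> suffix_code X.
Proof.
move=> [H1 H2]; split=> [x Hx|x y Hx Hy Hp].
  by move=> E; apply: (H1 (rev x)); rewrite /revL ?revK // E.
have Hx' : revL X (rev x) by rewrite /revL revK.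
have Hy' : revL X (rev y) by rewrite /revL revK.
have E := H2 _ _ Hx' Hy' (proj1 (suf_rev _ _) Hp).
by rewrite -(revK x) E revK.
Qed.

Lemma SC_rev' X : suffix_code (revL X) -> prefix_code X.
Proof.
move=> [H1 H2]; split=> [x Hx|x y Hx Hy Hp].
  by move=> E; apply: (H1 (rev x)); rewrite /revL ?revK // E.
have Hx' : revL X (rev x) by rewrite /revL revK.
have Hy' : revL X (rev y) by rewrite /revL revK.
have E := H2 _ _ Hx' Hy' (proj1 (pre_rev _ _) Hp).
by rewrite -(revK x) E revK.
Qed.

Lemma LC_rev F X : right_F_complete F X -> left_F_complete (revL F) (revL X).
Proof.
move=> H w Hw; have [U [HU HP]] := H _ Hw.
exists (rev U); split; first by apply: star_rev.
by rewrite -(revK w); apply/pre_rev.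
Qed.

Lemma RC_rev F X : left_F_complete F X -> right_F_complete (revL F) (revL X).
Proof.
move=> H w Hw; have [U [HU HP]] := H _ Hw.
exists (rev U); split; first by apply: star_rev.
by rewrite -(revK w); apply/suf_rev.
Qed.

Lemma LC_rev' F X : right_F_complete (revL F) (revL X) -> left_F_complete F X.
Proof.
move=> H w Hw; have Hw' : revL F (rev w) by rewrite /revL revK.
have [U [HU HP]] := H _ Hw'.
exists (rev U); split; first by apply: star_rev'.
by apply/suf_rev; rewrite revK.
Qed.

Lemma RC_rev' F X : left_F_complete (revL F) (revL X) -> right_F_complete F X.
Proof.
move=> H w Hw; have Hw' : revL F (rev w) by rewrite /revL revK.
have [U [HU HP]] := H _ Hw'.
exists (rev U); split; first by apply: star_rev'.
by apply/pre_rev; rewrite revK.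
Qed.

Lemma rec_rev F : recurrent F -> recurrent (revL F).
Proof.
move=> [[[w0 Hw0] Hf] Hr]; split; first split.
- by exists (rev w0); rewrite /revL revK.
- move=> w u Hw Hu; apply: (Hf _ _ Hw); exact: factor_rev.
- move=> u w Hu Hw; have [v [Hv H]] := Hr _ _ Hw Hu.
  exists (rev v); split; first by rewrite /revL revK.
  by rewrite /revL !rev_cat !revK -catA.
Qed.

Lemma thin_rev F X : F_thin F X -> F_thin (revL F) (revL X).
Proof.
move=> [w [Hw H]]; exists (rev w); split; first by rewrite /revL revK.
move=> x Hx Hf; apply: (H _ Hx); rewrite -(revK w); exact: factor_rev.
Qed.

Lemma sub_rev F X : subset_lang X F -> subset_lang (revL X) (revL F).
Proof. by move=> H w; apply: H. Qed.

Lemma MP_rev F X : F_maximal_suffix F X -> F_maximal_prefix (revL F) (revL X).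
Proof.
move=> [Hc [Hs Hm]]; split; first exact: PC_rev.
split; first exact: sub_rev.
move=> Y HY HYF HXY w Hw.
have H := Hm (revL Y) (SC_rev HY).
have : revL Y (rev w) by rewrite /revL revK.
apply: H.
- by move=> v Hv; have := HYF _ Hv; rewrite /revL revK.
- by move=> v Hv; apply: HXY; rewrite /revL revK.
Qed.

Lemma MP_rev' F X : F_maximal_prefix (revL F) (revL X) -> F_maximal_suffix F X.
Proof.
move=> [Hc [Hs Hm]]; split; first exact: PC_rev'.
split; first by move=> v Hv; have := Hs (rev v); rewrite /revL revK; apply.
move=> Y HY HYF HXY w Hw.
have H := Hm (revL Y) (PC_rev HY).
have : revL X (rev w).
  apply: H; last by rewrite /revL revK.
  - by move=> v Hv; apply: HYF.
  - by move=> v Hv; apply: HXY.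
by rewrite /revL revK.
Qed.

Lemma pre_trans u v w : is_prefix u v -> is_prefix v w -> is_prefix u w.
Proof. by move=> [s ->] [s' ->]; exists (s ++ s'); rewrite catA. Qed.
Lemma suf_trans u v w : is_suffix u v -> is_suffix v w -> is_suffix u w.
Proof. by move=> [s ->] [s' ->]; exists (s' ++ s); rewrite catA. Qed.

Lemma add_prefix X w t : prefix_code X ->
  (forall x, X x -> is_prefix x w -> False) ->
  (forall x, X x -> is_prefix w x -> False) -> w <> [::] -> is_prefix w t ->
  prefix_code (fun s => X s \/ s = t).
Proof.
move=> [H1 H2] N1 N2 Hw [k Ht]; split.
  move=> x [Hx|->]; first exact: H1.
  by rewrite Ht; case: (w) Hw.
move=> x y [Hx|->] [Hy|->] Hp.
- exact: H2.
- exfalso; move: Hp => [s]; rewrite Ht => /esym /prefix_cmp [].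
  + by apply: N1.
  + by apply: N2.
- exfalso; apply: (N2 _ Hy); apply: pre_trans Hp; by exists k.
- by [].
Qed.

Lemma add_suffix X w t : suffix_code X ->
  (forall x, X x -> is_suffix x w -> False) ->
  (forall x, X x -> is_suffix w x -> False) -> w <> [::] -> is_suffix w t ->
  suffix_code (fun s => X s \/ s = t).
Proof.
move=> [H1 H2] N1 N2 Hw [k Ht]; split.
  move=> x [Hx|->]; first exact: H1.
  by rewrite Ht; case: (w) Hw => // ? ?; case: k {Ht}.
move=> x y [Hx|->] [Hy|->] Hp.
- exact: H2.
- exfalso; move: Hp => [s]; rewrite Ht => /esym /suffix_cmp [].
  + by apply: N1.
  + by apply: N2.
- exfalso; apply: (N2 _ Hy); apply: suf_trans Hp; by exists k.
- by [].
Qed.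

Lemma notmax_ex (code : lang A -> Prop) F X : code X -> subset_lang X F ->
  ~ F_maximal code F X -> exists Y w, [/\ code Y, subset_lang Y F,
     subset_lang X Y, Y w & ~ X w].
Proof.
move=> H1 H2 H; apply: NNPP => N; apply: H; split=> //; split=> //.
move=> Y HY HYF HXY w Hw; apply: NNPP => Nw; apply: N; exists Y, w; by split.
Qed.

Lemma PC_RC_MP F X : prefix_code X -> right_F_complete F X ->
  subset_lang X F -> F_maximal_prefix F X.
Proof.
move=> HP HR HXF; split=> //; split=> // Y HY HYF HXY y Hy.
have [U [[l [Hl ->]] [s Hs]]] := HR _ (HYF _ Hy).
case: l Hl Hs => [|x l] Hl /=.
  case: y Hy => [Hy|a y Hy] //; by case: (HY.1 _ Hy).
move/esym=> E; have Hx : X x by apply: Hl; rewrite inE eqxx.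
case: (prefix_cmp E) => Hp.
- by rewrite (HY.2 _ _ Hy (HXY _ Hx) Hp).
- by rewrite -(HY.2 _ _ (HXY _ Hx) Hy Hp).
Qed.

Lemma MP_comparable F X s : F_maximal_prefix F X -> F s -> s <> [::] ->
  exists x, X x /\ (is_prefix x s \/ is_prefix s x).
Proof.
move=> [HP [HXF Hm]] Hs Hne; apply: NNPP => N.
have N1 : forall x, X x -> is_prefix x s -> False.
  by move=> x Hx Hp; apply: N; exists x; split=> //; left.
have N2 : forall x, X x -> is_prefix s x -> False.
  by move=> x Hx Hp; apply: N; exists x; split=> //; right.
have HY := add_prefix HP N1 N2 Hne (ex_intro _ [::] (esym (cats0 s))).
have Hs' := Hm _ HY (fun w H => match H with or_introl h => HXF _ h
                        | or_intror e => eq_ind_r F Hs e end)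
  (fun w h => or_introl h) s (or_intror erefl).
by apply: (N1 _ Hs'); exists [::]; rewrite cats0.
Qed.

Lemma MP_decomp F X : Defs.factorial F -> F_maximal_prefix F X -> forall n s,
  size s <= n -> F s -> exists l p, [/\ (forall x, x \in l -> X x),
  s = flatten l ++ p & (p = [::] \/ exists x, X x /\ is_prefix p x)].
Proof.
move=> [_ Hf] HM; elim=> [|n IH] s.
  by case: s => // _ _; exists [::], [::]; split=> //; left.
case: (altP (s =P [::])) => [-> _ _|Hne Hsz Hs].
  by exists [::], [::]; split=> //; left.
have [x [Hx [[s' E]|Hp]]] := MP_comparable HM Hs (elimN eqP Hne).
- have Hx0 : x <> [::] by apply: (HM.1.1).
  have Hs' : F s' by apply: (Hf _ _ Hs); exists x, [::]; rewrite cats0.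
  have Hsz' : size s' <= n.
    move: Hsz; rewrite E size_cat; case: x Hx0 {Hx E} => //= a x _.
    by rewrite addSn ltnS; apply: leq_trans; apply: leq_addl.
  have [l [p [Hl Es' Hp]]] := IH _ Hsz' Hs'.
  exists (x :: l), p; split=> //; last by rewrite E Es' catA.
  by move=> y; rewrite inE => /orP [/eqP ->|]; [|apply: Hl].
- by exists [::], s; split=> //; right; exists x.
Qed.

Lemma MP_RC F X : recurrent F -> F_thin F X -> F_maximal_prefix F X ->
  right_F_complete F X.
Proof.
move=> [Hfac Hr] [u [Hu Hth]] HM w Hw.
have [v [Hv Hwvu]] := Hr _ _ Hw Hu.
have [l [p [Hl E Hp]]] := MP_decomp Hfac HM (leqnn _) Hwvu.
case: (cat_cmp E) => [[k Hk]|[k Hk]].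
  by exists (flatten l); split; [exists l | exists k].
move: E; rewrite Hk -catA => /(congr1 (drop (size (flatten l)))).
rewrite !drop_size_cat // => Ep.
case: Hp => [Hp|[x [Hx [s Hs]]]].
  exists (flatten l); split; first by exists l.
  by exists [::]; move: Ep; rewrite Hp cats0; case: (k) => [_|//]; rewrite cats0.
exfalso; apply: (Hth _ Hx); exists (k ++ v), s.
by rewrite Hs -Ep -!catA.
Qed.

Lemma MB_MP_or_MS F X : recurrent F -> F_maximal_bifix F X ->
  F_maximal_prefix F X \/ F_maximal_suffix F X.
Proof.
move=> [_ Hr] [[HP HS] [HXF Hm]].
case: (classic (F_maximal_prefix F X)) => [h|NP]; [by left|right].
apply: NNPP => NS.
have [Y [w [HY HYF HXY Hw Nw]]] := notmax_ex HP HXF NP.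
have [Z [z [HZ HZF HXZ Hz Nz]]] := notmax_ex HS HXF NS.
have N1 : forall x, X x -> is_prefix x w -> False.
  by move=> x Hx Hp; apply: Nw; rewrite -(HY.2 _ _ (HXY _ Hx) Hw Hp).
have N2 : forall x, X x -> is_prefix w x -> False.
  by move=> x Hx Hp; apply: Nw; rewrite (HY.2 _ _ Hw (HXY _ Hx) Hp).
have M1 : forall x, X x -> is_suffix x z -> False.
  by move=> x Hx Hp; apply: Nz; rewrite -(HZ.2 _ _ (HXZ _ Hx) Hz Hp).
have M2 : forall x, X x -> is_suffix z x -> False.
  by move=> x Hx Hp; apply: Nz; rewrite (HZ.2 _ _ Hz (HXZ _ Hx) Hp).
have [v [Hv Ht]] := Hr _ _ (HYF _ Hw) (HZF _ Hz).
set t := w ++ v ++ z in Ht.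
have Pt : is_prefix w t by exists (v ++ z).
have St : is_suffix z t by exists (w ++ v); rewrite /t catA.
have Hbi : bifix_code (fun s => X s \/ s = t).
  split; [apply: (add_prefix HP N1 N2 _ Pt) | apply: (add_suffix HS M1 M2 _ St)].
  - exact: HY.1.
  - exact: HZ.1.
have := Hm _ Hbi (fun s H => match H with or_introl h => HXF _ h
                        | or_intror e => eq_ind_r F Ht e end)
  (fun s h => or_introl h) t (or_intror erefl).
by move/N2; apply.
Qed.

Lemma MP_MS_MB F X : F_maximal_prefix F X -> F_maximal_suffix F X ->
  F_maximal_bifix F X.
Proof.
move=> [HP [HXF Hm]] [HS _]; split; first by split.
split=> // Y [HYP _] HYF HXY; exact: Hm.
Qed.

End Gen.

Lemma suffix_decomp (A : finType) (X : lang A) (L : seq (seq A)) q z :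
  (forall x, x \in L -> X x) -> q ++ z = flatten L ->
  exists r l0, [/\ z = r ++ flatten l0, (forall x, x \in l0 -> X x) &
     (r = [::] \/ exists x, X x /\ factor r x)].
Proof.
elim: L q => [|x L IH] q HL /=.
  by case: q => //; case: z => // _; exists [::], [::]; split=> //; left.
move=> E; have HL' : forall y, y \in L -> X y.
  by move=> y Hy; apply: HL; rewrite inE Hy orbT.
case: (cat_cmp E) => [[k Hk]|[k Hk]].
- subst x; move: E; rewrite -catA => /(congr1 (drop (size q))).
  rewrite !drop_size_cat // => Ez.
  exists k, L; split=> //; right; exists (q ++ k); split.
    by apply: HL; rewrite inE eqxx.
  by exists q, [::]; rewrite cats0.
- subst q; move: E; rewrite -catA => /(congr1 (drop (size x))).
  rewrite !drop_size_cat // => Ez; exact: IH Ez.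
Qed.

Lemma ex_min (T : Type) (P : T -> Prop) (f : T -> nat) :
  (exists t, P t) -> exists t, P t /\ forall t', P t' -> f t <= f t'.
Proof.
move=> [t Ht].
suff H : forall n t, P t -> f t <= n -> exists t, P t /\ forall t', P t' -> f t <= f t'.
  exact: (H _ t Ht (leqnn _)).
elim=> [|n IH] t0 H0 Hn.
  by exists t0; split=> // t' _; move: Hn; rewrite leqn0 => /eqP ->.
case: (classic (forall t', P t' -> f t0 <= f t')) => [Hm|Hm].
  by exists t0.
have [t' Ht'] : exists t', ~ (P t' -> f t0 <= f t').
  apply: NNPP => N; apply: Hm => t' Ht'; apply: NNPP => N'; apply: N.
  by exists t' => H; apply: N'; exact: H Ht'.
have [Pt' Nt'] : P t' /\ ~ (f t0 <= f t').
  split; [apply: NNPP => N; apply: Ht' => h; exact: (False_ind _ (N h)) | move=> h; apply: Ht' => _; exact: h].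
apply: (IH t' Pt'); move/negP: Nt'; rewrite -ltnNge => H.
by rewrite -ltnS; apply: leq_trans Hn.
Qed.

Section Phase.
Variable A : finType.
Variable X : lang A.

Definition inX (w : seq A) : bool :=
  if excluded_middle_informative (X w) then true else false.
Lemma inXE w : inX w = true <-> X w.
Proof. by rewrite /inX; case: excluded_middle_informative. Qed.

Definition step (st : seq A) (a : A) : seq A :=
  if inX (rcons st a) then [::] else rcons st a.
Definition dec := foldl step.
Definition alive st := exists x, X x /\ is_prefix st x /\ st <> x.
Definition aliveb st : bool :=
  if excluded_middle_informative (alive st) then true else false.
Lemma alivebE st : aliveb st = true <-> alive st.
Proof. by rewrite /aliveb; case: excluded_middle_informative. Qed.

Lemma dec_cat st b e : dec st (b ++ e) = dec (dec st b) e.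
Proof. exact: foldl_cat. Qed.

Lemma alive_step st a : alive (step st a) -> alive st.
Proof.
rewrite /step; case E: (inX (rcons st a)).
  move=> _; move/inXE: E => Hx; exists (rcons st a); split=> //; split.
    by exists [:: a]; rewrite cats1.
  move=> H; have := congr1 size H; rewrite size_rcons => /eqP.
  by rewrite -[X in X == _]addn0 -addn1 eqn_add2l.
move=> [x [Hx [[s Hs] Hne]]]; exists x; split=> //; split.
  by exists (a :: s); rewrite Hs -cats1 -catA.
move=> H; have := congr1 size Hs; rewrite -H size_cat size_rcons => /eqP.
by rewrite ltn_eqF // addSn ltnS leq_addr.
Qed.

Lemma alive_dec e st : alive (dec st e) -> alive st.
Proof.
elim: e st => [|a e IH] st H //; apply: (@alive_step _ a); exact: IH.
Qed.

Lemma dec_inv b st : exists l, (forall x, x \in l -> X x) /\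
  st ++ b = flatten l ++ dec st b.
Proof.
elim: b st => [|a b IH] st.
  by exists [::]; rewrite cats0.
have [l [Hl E]] := IH (step st a).
have -> : dec st (a :: b) = dec (step st a) b by [].
have Hs : step st a = if inX (rcons st a) then [::] else rcons st a by [].
move: E Hs; set s := step st a => E.
case Ex: (inX (rcons st a)) => Hs.
- exists (rcons st a :: l); split.
    move=> x; rewrite inE => /orP [/eqP ->|]; [exact/inXE|exact: Hl].
  by rewrite /= -catA -E Hs /= cat_rcons.
- by exists l; split=> //; rewrite -E Hs cat_rcons.
Qed.

Hypothesis HP : prefix_code X.

Lemma not_inX_proper s a k : k <> [::] -> X (rcons s a ++ k) -> inX (rcons s a) = false.
Proof.
move=> Hk Hx; case E: (inX (rcons s a)) => //; move/inXE: E => E.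
have := HP.2 _ _ E Hx (ex_intro _ k erefl) => /(congr1 size) /eqP.
rewrite size_cat -[X in X == _]addn0 eqn_add2l eq_sym size_eq0 => /eqP. by [].
Qed.

Lemma dec_X k s : X (s ++ k) -> k <> [::] -> dec s k = [::].
Proof.
elim: k s => // a k IH s Hx _ /=; rewrite /step.
case: k IH Hx => [|b k] IH Hx.
  by have -> : inX (rcons s a) by apply/inXE; rewrite -cats1.
rewrite (@not_inX_proper s a (b :: k)) //; last by rewrite cat_rcons.
by apply: IH; rewrite ?cat_rcons.
Qed.

Lemma dec_Xcat x b : X x -> dec [::] (x ++ b) = dec [::] b.
Proof. by move=> Hx; rewrite dec_cat (@dec_X x [::]) //; apply: HP.1. Qed.

Lemma dec_flat l b : (forall x, x \in l -> X x) -> dec [::] (flatten l ++ b) = dec [::] b.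
Proof.
elim: l => //= x l IH H; rewrite -catA dec_Xcat; last by apply: H; rewrite inE eqxx.
by apply: IH => y Hy; apply: H; rewrite inE Hy orbT.
Qed.

Lemma dec_pref x p s : X (s ++ p ++ x) -> x <> [::] -> dec s p = s ++ p.
Proof.
elim: p s => [|a p IH] s Hx Hne /=; first by rewrite cats0.
rewrite /step (@not_inX_proper s a (p ++ x)); last by rewrite cat_rcons.
  by rewrite IH ?cat_rcons.
by case: p {IH Hx} => //; case: x Hne.
Qed.

Variable u : seq A.
Definition phi (z : seq A) (c : nat) := dec [::] (drop c z).
Definition Pz z := [seq c <- iota 0 (size u) | aliveb (phi z c)].
Definition Rz z := undup (map (phi z) (Pz z)).

Lemma RzP z st : st \in Rz z <-> exists c, [/\ c < size u, alive (phi z c) & st = phi z c].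
Proof.
rewrite mem_undup; split.
  move/mapP=> [c]; rewrite mem_filter mem_iota add0n => /andP [Ha /andP [_ Hc]] ->.
  by exists c; split=> //; apply: (proj1 (alivebE _) Ha).
move=> [c [Hc Ha ->]]; apply: map_f; rewrite mem_filter mem_iota add0n Hc andbT leq0n andbT.
exact: (proj2 (alivebE _) Ha).
Qed.

Lemma Rz_alive z st : st \in Rz z -> alive st.
Proof. by move/RzP=> [c [_ H ->]]. Qed.

Lemma phi_cat z e c : c < size u -> size u <= size z -> phi (z ++ e) c = dec (phi z c) e.
Proof.
move=> Hc Hz; by rewrite /phi drop_cat (leq_trans Hc Hz) dec_cat.
Qed.

Lemma Rz_ext z e st' : size u <= size z -> st' \in Rz (z ++ e) ->
  exists2 st, st \in Rz z & st' = dec st e.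
Proof.
move=> Hz /RzP [c [Hc Ha ->]]; rewrite phi_cat //; exists (phi z c) => //.
apply/RzP; exists c; split=> //; apply: (@alive_dec e); by rewrite -phi_cat.
Qed.

Lemma Rz_sub z e : size u <= size z ->
  {subset Rz (z ++ e) <= map (dec^~ e) (Rz z)}.
Proof. by move=> Hz st /(Rz_ext Hz) [st0 H ->]; apply: map_f. Qed.

Lemma N_ext z e : size u <= size z -> size (Rz (z ++ e)) <= size (Rz z).
Proof.
move=> Hz; rewrite -(size_map (dec^~ e) (Rz z)).
have U : uniq (Rz (z ++ e)) by exact: undup_uniq. exact: (uniq_leq_size U (@Rz_sub z e Hz)).
Qed.

Lemma min_props z e : size u <= size z -> size (Rz z) <= size (Rz (z ++ e)) ->
  (forall st, st \in Rz z -> dec st e \in Rz (z ++ e)) /\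
  (forall s1 s2, s1 \in Rz z -> s2 \in Rz z -> dec s1 e = dec s2 e -> s1 = s2).
Proof.
move=> Hz Hn; set M := map (dec^~ e) (Rz z).
have Hsub := @Rz_sub z e Hz.
have HM : size M <= size (Rz (z ++ e)) by rewrite size_map.
have [_ Heq] := uniq_min_size (undup_uniq _) Hsub HM.
split.
  by move=> st Hst; rewrite Heq; apply: (map_f (dec^~ e)).
have HuM : uniq M.
  have Hs2 : {subset Rz (z ++ e) <= undup M} by move=> s Hs; rewrite mem_undup; exact: Hsub.
  have Hle := uniq_leq_size (undup_uniq _) Hs2.
  rewrite (@uniq_size_uniq _ (undup M) M (undup_uniq _)); last by move=> s; rewrite mem_undup.
  rewrite eqn_leq size_undup andbT; apply: leq_trans Hle; by rewrite size_map.
move=> s1 s2 H1 H2 E; exact: (uniq_map_inj HuM H1 H2 E).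
Qed.
End Phase.

Section PhaseThm.
Variable A : finType.
Variables F X : lang A.
Hypothesis hF : recurrent F.
Hypothesis HP : prefix_code X.
Hypothesis HL : left_F_complete F X.
Variable u : seq A.
Hypothesis Hu : F u.
Hypothesis Hth : forall x, X x -> ~ factor u x.
Variable x0 : seq A.
Hypothesis Hx0 : X x0.

Lemma anchored z : F z -> is_prefix u z -> [::] \in Rz X u z.
Proof.
move=> Hz [t Ht].
have [U [[L [HLX EU]] [q Hq]]] := HL Hz.
have [r [l0 [Er Hl0 Hr]]] := suffix_decomp HLX (esym (etrans (esym EU) Hq)).
have Hsr : size r < size u.
  rewrite ltnNge; apply/negP => Hle.
  have Hfu : factor u r.
    have E : u ++ t = r ++ flatten l0 by rewrite -Ht.
    case: (cat_cmp E) => [[k Hk]|[k Hk]].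
      by exists [::], k.
    move: Hle; rewrite Hk size_cat; case: k Hk => [|a k] Hk.
      by rewrite cats0 => _; exists [::], [::]; rewrite cats0.
    by rewrite /= addnS ltnNge leq_addr.
  case: Hr => [Hr0|[x [Hx Hf]]].
    apply: (Hth Hx0); move: Hfu; rewrite Hr0 => [[p [s /esym/eqP]]].
    rewrite -size_eq0 !size_cat !addn_eq0 !size_eq0 => /and3P [_ /eqP -> _].
    by exists [::], x0.
  by apply: (Hth Hx); apply: factor_trans Hf.
apply/RzP; exists (size r); split=> //; rewrite /phi Er drop_size_cat //.
  rewrite -(cats0 (flatten l0)) (dec_flat HP) //.
  exists x0; split=> //; split; first by exists x0.
  by move=> E; apply: (HP.1 _ Hx0); rewrite -E.
by rewrite -(cats0 (flatten l0)) (dec_flat HP).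
Qed.

Definition cand z := F z /\ is_prefix u z.

Lemma cand_size z : cand z -> size u <= size z.
Proof. by move=> [_ [s ->]]; rewrite size_cat leq_addr. Qed.

Lemma min_exists : exists z0, cand z0 /\ forall z, cand z -> size (Rz X u z0) <= size (Rz X u z).
Proof. apply: ex_min; exists u; split=> //; by exists [::]; rewrite cats0. Qed.

Lemma cand_ext z e : cand z -> F (z ++ e) -> cand (z ++ e).
Proof. by move=> [_ [s ->]] H; split=> //; exists (s ++ e); rewrite catA. Qed.

Lemma F_pre z e : F (z ++ e) -> F z.
Proof. move=> H; apply: (hF.1.2 _ _ H); by exists [::], e. Qed.

Lemma F_suf z e : F (z ++ e) -> F e.
Proof. move=> H; apply: (hF.1.2 _ _ H); by exists z, [::]; rewrite cats0. Qed.

Lemma phase_RC_aux : right_F_complete F X.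
Proof.
have [z0 [Hc0 Hm0]] := min_exists.
move=> w Hw.
have [g [_ Hg]] := hF.2 _ _ Hc0.1 Hw.
set z1 := z0 ++ g.
have Hz1w : F (z1 ++ w) by rewrite /z1 -catA.
have Hc1 : cand z1 by apply: cand_ext Hc0 (F_pre Hz1w).
have Hc1w : cand (z1 ++ w) by apply: cand_ext Hc1 Hz1w.
have Hn : size (Rz X u z1) <= size (Rz X u (z1 ++ w)).
  apply: leq_trans (Hm0 _ Hc1w); exact: N_ext (cand_size Hc0).
have [Htot _] := min_props (e:=w) (cand_size Hc1) Hn.
have /Rz_alive [x [Hx [[s Hs] _]]] := Htot _ (anchored (F_pre Hz1w) Hc1.2).
have [l [Hl E]] := @dec_inv A X w [::].
exists (flatten (rcons l x)); split; first by exists (rcons l x); split=> // y; rewrite mem_rcons inE => /orP [/eqP ->|]; [|apply: Hl].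
exists s; rewrite -cats1 flatten_cat /= cats0 Hs catA -E. by [].
Qed.

Hypothesis HXF : subset_lang X F.

Lemma phase_SC_aux x y : X x -> X y -> is_suffix x y -> x = y.
Proof.
move=> Hx Hy [p Hp].
case: (altP (p =P [::])) => [Ep|Np]; first by rewrite Hp Ep.
exfalso.
have [z0 [Hc0 Hm0]] := min_exists.
have [g [_ Hg]] := hF.2 _ _ Hc0.1 (HXF Hy).
set z1 := z0 ++ g.
have Hz1y : F (z1 ++ y) by rewrite /z1 -catA.
have Hc1 : cand z1 by apply: cand_ext Hc0 (F_pre Hz1y).
have Hc1y : cand (z1 ++ y) by apply: cand_ext Hc1 Hz1y.
have Hz1p : F (z1 ++ p) by apply: (@F_pre _ x); rewrite -catA -Hp.
have Hc1p : cand (z1 ++ p) by apply: cand_ext Hc1 Hz1p.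
have [st Hst Est] := Rz_ext (e:=p) (cand_size Hc1) (anchored Hz1p Hc1p.2).
have Hn : size (Rz X u z1) <= size (Rz X u (z1 ++ y)).
  apply: leq_trans (Hm0 _ Hc1y); exact: N_ext (cand_size Hc0).
have [_ Hinj] := min_props (e:=y) (cand_size Hc1) Hn.
have Hxne : x <> [::] by apply: HP.1.
have E1 : dec X st y = [::].
  by rewrite Hp dec_cat -Est -(cats0 x) (dec_Xcat HP).
have E2 : dec X [::] y = [::] by rewrite -(cats0 y) (dec_Xcat HP).
have Est0 := Hinj _ _ Hst (anchored (F_pre Hz1y) Hc1.2) (etrans E1 (esym E2)).
move: Est; rewrite Est0 (@dec_pref _ _ HP x p [::]) //; last by rewrite -Hp.
by move=> /= E; rewrite -E eqxx in Np.
Qed.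
End PhaseThm.

Section Final.
Variable A : finType.
Implicit Types F X : lang A.

Lemma phase_RC F X : recurrent F -> prefix_code X -> left_F_complete F X ->
  F_thin F X -> right_F_complete F X.
Proof.
move=> hF HP HL [u [Hu Hth]].
case: (classic (exists x0, X x0)) => [[x0 Hx0]|NX].
  exact: (@phase_RC_aux A F X hF HP HL u Hu Hth x0 Hx0).
move=> w Hw; have [U [[l [Hl EU]] [q Hq]]] := HL _ Hw.
case: l Hl EU => [|x l] Hl EU.
  exists U; split; first by exists [::].
  by exists [::]; move: Hq; rewrite EU; case: q => //; case: (w).
by exfalso; apply: NX; exists x; apply: Hl; rewrite inE eqxx.
Qed.

Lemma phase_SC F X : recurrent F -> prefix_code X -> left_F_complete F X ->
  F_thin F X -> subset_lang X F -> suffix_code X.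
Proof.
move=> hF HP HL [u [Hu Hth]] HXF; split; first exact: HP.1.
move=> x y Hx Hy.
exact: (@phase_SC_aux A F X hF HP HL u Hu Hth x Hx HXF x y Hx Hy).
Qed.

Lemma phase_LC F X : recurrent F -> suffix_code X -> right_F_complete F X ->
  F_thin F X -> left_F_complete F X.
Proof.
move=> hF HS HR Ht; apply: LC_rev'; apply: phase_RC.
- exact: rec_rev.
- exact: PC_rev.
- exact: LC_rev.
- exact: thin_rev.
Qed.

Lemma phase_PC F X : recurrent F -> suffix_code X -> right_F_complete F X ->
  F_thin F X -> subset_lang X F -> prefix_code X.
Proof.
move=> hF HS HR Ht HXF; apply: SC_rev'; apply: (phase_SC (F := revL F)).
- exact: rec_rev.
- exact: PC_rev.
- exact: LC_rev.
- exact: thin_rev.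
- exact: sub_rev.
Qed.

Lemma SC_LC_MS F X : suffix_code X -> left_F_complete F X ->
  subset_lang X F -> F_maximal_suffix F X.
Proof.
move=> HS HL HXF; apply: MP_rev'; apply: PC_RC_MP.
- exact: PC_rev.
- exact: RC_rev.
- exact: sub_rev.
Qed.

Lemma MS_LC F X : recurrent F -> F_thin F X -> F_maximal_suffix F X ->
  left_F_complete F X.
Proof.
move=> hF Ht HM; apply: LC_rev'; apply: MP_RC.
- exact: rec_rev.
- exact: thin_rev.
- exact: MP_rev.
Qed.

End Final.

Theorem mainTheorem1 (A : finType) (F X : lang A)
  (hF : recurrent F) (hXF : subset_lang X F) (hthin : F_thin F X) :
  (F_maximal_bifix F X <-> prefix_code X /\ left_F_complete F X) /\
  (F_maximal_bifix F X <-> suffix_code X /\ right_F_complete F X) /\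
  (F_maximal_bifix F X <-> F_maximal_prefix F X /\ F_maximal_suffix F X).
Proof.
have iii_i : F_maximal_prefix F X /\ F_maximal_suffix F X -> F_maximal_bifix F X.
  by move=> [H1 H2]; apply: MP_MS_MB.
have i_iii : F_maximal_bifix F X -> F_maximal_prefix F X /\ F_maximal_suffix F X.
  move=> HB; have [[HP HS] _] := HB.
  case: (MB_MP_or_MS hF HB) => [HM|HM].
  - have HR := MP_RC hF hthin HM.
    split=> //; apply: SC_LC_MS => //; exact: phase_LC.
  - have HL := MS_LC hF hthin HM.
    split=> //; apply: PC_RC_MP => //; exact: phase_RC.
have ii_iii : prefix_code X /\ left_F_complete F X ->
    F_maximal_prefix F X /\ F_maximal_suffix F X.
  move=> [HP HL]; split.
  - apply: PC_RC_MP => //; exact: phase_RC.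
  - apply: SC_LC_MS => //; exact: (phase_SC hF HP HL hthin hXF).
have ii'_iii : suffix_code X /\ right_F_complete F X ->
    F_maximal_prefix F X /\ F_maximal_suffix F X.
  move=> [HS HR]; split.
  - apply: PC_RC_MP => //; exact: (phase_PC hF HS HR hthin hXF).
  - apply: SC_LC_MS => //; exact: phase_LC.
have iii_ii : F_maximal_prefix F X /\ F_maximal_suffix F X ->
    prefix_code X /\ left_F_complete F X.
  move=> [HM HS]; split; [exact: HM.1 | exact: MS_LC].
have iii_ii' : F_maximal_prefix F X /\ F_maximal_suffix F X ->
    suffix_code X /\ right_F_complete F X.
  move=> [HM HS]; split; [exact: HS.1 | exact: MP_RC].
split; last split.
- split=> H; [exact: iii_ii (i_iii H) | exact: iii_i (ii_iii H)].
- split=> H; [exact: iii_ii' (i_iii H) | exact: iii_i (ii'_iii H)].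
- by split.
Qed.
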